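(* Let $l \ge 3$ be an integer and $d = 4l$. For $T\subseteq[d]$ write $e_T\in\{0,1\}^d$ for the indicator vector of $T$. Let the demonstration set $D$ consist of all vectors $e_{T_1\cup T_2}$ with $T_1\subseteq[2l]$, $|T_1| = l-1$, and $T_2\subseteq\{2l+1,\dots,4l\}$, $|T_2| = 1$ (the entire support of the demonstration distribution). Let the query $e_q = e_T$ with $T$ drawn uniformly among subsets of $[2l]$ of size $l$. Let $\theta\in\mathbb R^d$ have i.i.d. entries uniform on $[0,1]$, independent of $e_q$, and let $K=2$. Let $L$ be the expected prediction loss $\mathbb E\big[\langle \theta - E^\dagger E\theta, e_q\rangle^2\big]$ when the two demonstrations (rows of $E$) are selected by TopK, and $L'$ the same quantity when they are selected by TopK-Div with hyperparameter $\alpha$, where the expectation is over $\theta$, $e_q$, and the random tie-breaking in the selection. Then $L > L'$ whenever $1 - 1/l \le \alpha < 1$.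
   Context: Cosine similarity: $\mathrm{Sim}(u,v) = \langle u,v\rangle/(\|u\|\|v\|)$. For a vector $e$ and a nonempty finite set $S$ of vectors, $\mathrm{Div}(e,S) = 1 - \frac{1}{|S|}\sum_{s\in S}\mathrm{Sim}(e,s)$, and $\mathrm{Div}(e,\emptyset)=0$. TopK selection: choose the $K$ elements of $D$ with the largest $\mathrm{Sim}(\cdot,e_q)$, ties broken uniformly at random. TopK-Div selection with parameter $\alpha$: start with $S=\emptyset$ and, while $|S|<K$, add an element $e\in D\setminus S$ maximizing $\alpha\,\mathrm{Sim}(e,e_q) + (1-\alpha)\mathrm{Div}(e,S)$ (ties broken uniformly at random); in particular the first selected element maximizes similarity to $e_q$. Given the selected demonstrations $e_{j_1},\dots,e_{j_K}$, $E = [e_{j_1},\dots,e_{j_K}]^\top\in\mathbb R^{K\times d}$, $E^\dagger$ is its Moore–Penrose pseudoinverse, the model's prediction on query $e_q$ is $\langle e_q, E^\dagger E\theta\rangle$ (the min-norm interpolating linear regression solution), the true label is $\langle\theta,e_q\rangle$, and the prediction loss is $\langle \theta - E^\dagger E\theta, e_q\rangle^2$. *)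

(* Defs.v *)
From HB Require Import structures.
From mathcomp Require Import all_boot all_order all_algebra.
From mathcomp Require Import all_classical all_reals all_analysis.
Set Implicit Arguments.
Unset Strict Implicit.
Unset Printing Implicit Defensive.
Import Order.TTheory GRing.Theory Num.Theory.
Import numFieldNormedType.Exports.
Local Open Scope ring_scope.

Section Defs.
Variable R : realType.

Definition inner (d : nat) (u v : 'rV[R]_d) : R := (u *m v^T) 0 0.

Definition enorm (d : nat) (u : 'rV[R]_d) : R := Num.sqrt (inner u u).

Definition Sim (d : nat) (u v : 'rV[R]_d) : R := inner u v / (enorm u * enorm v).

(* Div(e,S) for S given as a (duplicate-free) list of vectors; Div(e,[]) = 0 *)
Definition Div (d : nat) (e : 'rV[R]_d) (S : seq 'rV[R]_d) : R :=
  if S is [::] then 0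
  else 1 - (size S)%:R^-1 * \sum_(s <- S) Sim e s.

Definition indic (d : nat) (T : {set 'I_d}) : 'rV[R]_d :=
  \row_(i < d) (if i \in T then 1 else 0).

Definition is_MP_pinv (m n : nat) (E : 'M[R]_(m, n)) (X : 'M[R]_(n, m)) : Prop :=
  [/\ E *m X *m E = E, X *m E *m X = X,
      (E *m X)^T = E *m X & (X *m E)^T = X *m E].

Definition pinv (m n : nat) (E : 'M[R]_(m, n)) : 'M[R]_(n, m) :=
  xget 0 [set X | is_MP_pinv E X].

Definition demo_mx (d K : nat) (I : finType) (e : I -> 'rV[R]_d)
  (t : K.-tuple I) : 'M[R]_(K, d) := \matrix_(k < K) e (tnth t k).

Definition pred_loss (d K : nat) (E : 'M[R]_(K, d)) (theta eq : 'rV[R]_d) : R :=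
  inner (theta - (pinv E *m E *m theta^T)^T) eq ^+ 2.

Fixpoint unif_iter (n : nat) (f : (nat -> R) -> R) : R :=
  match n with
  | 0 => f (fun _ => 0)
  | n'.+1 =>
      \int[@lebesgue_measure R]_(x in `[0%R, 1%R]%classic)
        unif_iter n' (fun g => f (fun i => if i == n' then x else g i))
  end.

Definition E_theta (d : nat) (F : 'rV[R]_d -> R) : R :=
  unif_iter d (fun g => F (\row_(i < d) g (i : nat))).

Section Selection.
Variables (d K : nat) (I : finType) (e : I -> 'rV[R]_d) (D : {set I}) (eq : 'rV[R]_d).

Definition simq (x : I) : R := Sim (e x) eq.

Definition topk_valid (t : K.-tuple I) : bool :=
  [&& uniq t, all (fun x => x \in D) t &
      [forall x in D, (x \notin t) ==> all (fun y => simq x <= simq y) t]].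

(* expected loss of TopK (ties uniformly at random, i.e. uniform over all
   valid selections) *)
Definition topk_loss : R :=
  (#|[set t : K.-tuple I | topk_valid t]|%:R)^-1 *
  \sum_(t : K.-tuple I | topk_valid t)
     E_theta (fun theta => pred_loss (demo_mx e t) theta eq).

Variable alpha : R.

Definition div_score (p : seq I) (x : I) : R :=
  alpha * simq x + (1 - alpha) * Div (e x) [seq e y | y <- p].

Definition div_argmax (p : seq I) : {set I} :=
  [set x in D :\: [set y in p] |
     [forall y in D :\: [set y in p], div_score p y <= div_score p x]].

(* probability that greedy selection with uniform tie-breaking outputs t
   (in this order) *)
Definition div_prob (t : K.-tuple I) : R :=
  \prod_(k < K)
    (if tnth t k \in div_argmax (take k t)
     then (#|div_argmax (take k t)|%:R)^-1 else 0).

Definition topkdiv_loss : R :=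
  \sum_(t : K.-tuple I)
     div_prob t * E_theta (fun theta => pred_loss (demo_mx e t) theta eq).

End Selection.

Section Instance.
Variable l : nat.

Definition dim := 4 * l.

Definition first_half : {set 'I_dim} := [set i : 'I_dim | (i < 2 * l)%N].
Definition second_half : {set 'I_dim} := [set i : 'I_dim | (2 * l <= i)%N].

Definition demo_set : {set {set 'I_dim}} :=
  [set T1 :|: T2 | T1 in [set T : {set 'I_dim} | (T \subset first_half) && (#|T| == l.-1)],
                   T2 in [set T : {set 'I_dim} | (T \subset second_half) && (#|T| == 1)%N]].

Definition query_set : {set {set 'I_dim}} :=
  [set T : {set 'I_dim} | (T \subset first_half) && (#|T| == l)].

Definition avg_query (F : 'rV[R]_dim -> R) : R :=
  (#|query_set|%:R)^-1 * \sum_(T in query_set) F (indic T).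

Definition L_topk : R :=
  avg_query (fun eq => topk_loss 2 (@indic dim) demo_set eq).

Definition L_topkdiv (alpha : R) : R :=
  avg_query (fun eq => topkdiv_loss 2 (@indic dim) demo_set eq alpha).

End Instance.
End Defs.

(* Main.v *)
Require Import Defs.
From HB Require Import structures.
From mathcomp Require Import all_boot all_order all_algebra.
From mathcomp Require Import all_classical all_reals all_analysis.
From mathcomp Require Import ring lra zify.
Import Order.TTheory GRing.Theory Num.Theory.
Import numFieldNormedType.Exports.
Local Open Scope ring_scope.

Section Int.
Variable R : realType.

Lemma int01_poly (p P : {poly R}) : P^`() = p ->
  Rintegral lebesgue_measure `[0%R, 1%R]%classic (horner p) = P.[1] - P.[0].
Proof.
move=> HP; rewrite /Rintegral (@continuous_FTC2 _ _ (horner P)).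
- by rewrite -EFinB.
- exact: ltr01.
- by apply/continuous_subspaceT => /= x; exact: continuous_horner.
- split.
  + by move=> x _; exact: derivable_horner.
  + apply: cvg_at_right_filter; exact: continuous_horner.
  + apply: cvg_at_left_filter; exact: continuous_horner.
- by move=> x _; rewrite -derivE HP.
Qed.

Lemma int01_quad (A B C : R) :
  Rintegral lebesgue_measure `[0%R, 1%R]%classic (fun x => A + B * x + C * x^+2)
  = A + B / 2 + C / 3.
Proof.
have -> : (fun x => A + B * x + C * x^+2) =
   horner (A%:P + B *: 'X + C *: 'X^2).
  by apply/funext => x; rewrite !hornerE.
rewrite (@int01_poly _ (A *: 'X + (B/2) *: 'X^2 + (C/3) *: 'X^3)).
  by rewrite !hornerD !hornerZ !hornerXn !hornerX !expr1n !expr0n /=; field.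
rewrite !poly.derivD !poly.derivZ poly.derivX !poly.derivXn /=.
rewrite alg_polyC expr1 -(scaler_nat 2 'X) -(scaler_nat 3 'X^2) !scalerA.
have -> : B / 2 * 2%:R = B by field.
have -> : C / 3 * 3%:R = C by field.
by [].
Qed.

Lemma unif_quad n (c : R) (a : nat -> R) :
  unif_iter n (fun g => (c + \sum_(i < n) a i * g i) ^+ 2) =
  (c + \sum_(i < n) a i / 2) ^+ 2 + \sum_(i < n) a i ^+ 2 / 12.
Proof.
elim: n c => [|n IH] c.
  by rewrite /= !big_ord0 !addr0.
rewrite [unif_iter _ _]/=.
have E : forall x : R,
  (fun g : nat -> R => (c + \sum_(i < n.+1) a i * (if i == n :> nat then x else g i)) ^+ 2)
  = (fun g => ((c + a n * x) + \sum_(i < n) a i * g i) ^+ 2).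
  move=> x; apply/funext => g; rewrite big_ord_recr /= eqxx.
  congr (_ ^+ 2).
  under eq_bigr => i _ do rewrite (ltn_eqF (ltn_ord i)).
  by rewrite addrAC addrA.
set S := \sum_(i < n) a i / 2.
set K := \sum_(i < n) a i ^+ 2 / 12.
have -> : (fun x : R => unif_iter n
     (fun g : nat -> R => (c + \sum_(i < n.+1) a i * (if i == n :> nat then x else g i)) ^+ 2))
  = (fun x => ((c + S) ^+ 2 + K) + (2 * (c + S) * a n) * x + (a n ^+ 2) * x ^+ 2).
  apply/funext => x; rewrite E IH -/S -/K; ring.
rewrite int01_quad !big_ord_recr /= -/S -/K; field; done.
Qed.
End Int.

Section LA.
Variable R : realType.
Variable d : nat.
Implicit Types u v w : 'rV[R]_d.

Lemma innerE u v : inner u v = \sum_j u 0 j * v 0 j.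
Proof. by rewrite /inner !mxE; apply: eq_bigr => j _; rewrite !mxE. Qed.

Lemma innerC u v : inner u v = inner v u.
Proof. by rewrite !innerE; apply: eq_bigr => j _; rewrite mulrC. Qed.

Lemma innerDl u v w : inner (u + v) w = inner u w + inner v w.
Proof. by rewrite !innerE -big_split; apply: eq_bigr => j _; rewrite mxE mulrDl. Qed.

Lemma innerBl u v w : inner (u - v) w = inner u w - inner v w.
Proof.
rewrite !innerE -sumrB; apply: eq_bigr => j _; rewrite !mxE mulrDl mulNr //.
Qed.

Lemma innerZl (c : R) u w : inner (c *: u) w = c * inner u w.
Proof. by rewrite !innerE mulr_sumr; apply: eq_bigr => j _; rewrite mxE mulrA. Qed.

Lemma inner_indic (A B : {set 'I_d}) :
  inner (Defs.indic R A) (Defs.indic R B) = #|A :&: B|%:R.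
Proof.
rewrite innerE -sum1_card natr_sum [RHS]big_mkcond /=; apply: eq_bigr => j _.
rewrite /Defs.indic !mxE inE; case: (j \in A); case: (j \in B); rewrite /= ?mulr1 ?mul0r ?mulr0 //.
Qed.

Lemma sum_indic (A : {set 'I_d}) : \sum_j (Defs.indic R A) 0 j = #|A|%:R.
Proof.
rewrite -sum1_card natr_sum [RHS]big_mkcond /=; apply: eq_bigr => j _.
by rewrite /Defs.indic !mxE; case: (j \in A).
Qed.

Lemma mulmx_tr_entry m (M : 'M[R]_(m, d)) (r : 'rV[R]_d) k :
  (M *m r^T) k 0 = inner (row k M) r.
Proof. by rewrite innerE !mxE; apply: eq_bigr => j _; rewrite !mxE. Qed.

Lemma mulmx_tr_entry2 m n (M : 'M[R]_(m, d)) (N : 'M[R]_(n, d)) i j :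
  (M *m N^T) i j = inner (row i M) (row j N).
Proof. by rewrite innerE !mxE; apply: eq_bigr => k _; rewrite !mxE. Qed.

Lemma loss_eq (E : 'M[R]_(2, d)) (q th : 'rV[R]_d) (w : 'rV[R]_2) :
  Defs.is_MP_pinv E (Defs.pinv E) -> E *m (q - w *m E)^T = 0 ->
  Defs.pred_loss E th q = inner th (q - w *m E) ^+ 2.
Proof.
move=> [h1 h2 h3 h4] HE; rewrite /pred_loss; congr (_ ^+ 2).
set X := Defs.pinv E.
have HPE : X *m E *m E^T = E^T.
  by rewrite -{1}h4 -trmx_mul mulmxA h1.
have HP : X *m E *m q^T = (w *m E)^T.
  have Hq : q^T = (q - w *m E)^T + (w *m E)^T by rewrite -raddfD /= subrK.
  rewrite Hq mulmxDr -mulmxA HE mulmx0 add0r trmx_mul mulmxA HPE //.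
rewrite /inner trmx_mul trmxK h4 mulmxBl -mulmxA HP.
by rewrite -mulmxBr -raddfB.
Qed.

Lemma MP_exists (E : 'M[R]_(2, d)) : E *m E^T \in unitmx -> Defs.is_MP_pinv E (Defs.pinv E).
Proof.
move=> HG; rewrite /Defs.pinv; apply: (@xgetPex _ 0 [set X | is_MP_pinv E X]).
exists (E^T *m invmx (E *m E^T)); rewrite /=; split.
- by rewrite mulmxA mulmxV // mul1mx.
- by rewrite -!mulmxA (mulmxA E) mulmxV // mulmx1.
- by rewrite mulmxA mulmxV // trmx1.
- by rewrite !trmx_mul trmxK trmx_inv trmx_mul trmxK mulmxA.
Qed.


Lemma ord2_cases (k : 'I_2) : k = 0 \/ k = 1.
Proof. case: k => [[|[|k]] Hk]; [left|right|] => //; exact: val_inj. Qed.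

Lemma unit22 (G : 'M[R]_2) (a b : R) :
  (forall i j, G i j = if i == j then a else b) -> a ^+ 2 != b ^+ 2 -> G \in unitmx.
Proof.
move=> HG Hab.
have Hab' : a ^+ 2 - b ^+ 2 != 0 by rewrite subr_eq0.
pose B := \matrix_(i < 2, j < 2) ((if i == j then a else - b) / (a ^+ 2 - b ^+ 2)).
apply: (proj1 (@mulmx1_unit _ _ G B _)).
apply/matrixP => i j; rewrite !mxE !big_ord_recr big_ord0 /= !mxE !HG.
case: (ord2_cases i) => ->; case: (ord2_cases j) => -> /=; field; done.
Qed.

Lemma demo_row (A B : {set 'I_d}) (k : 'I_2) :
  row k (demo_mx (@Defs.indic R d) [tuple A; B]) =
  if k == 0 then Defs.indic R A else Defs.indic R B.
Proof.
rewrite /demo_mx rowK; case: (ord2_cases k) => -> //.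
Qed.

Lemma loss_pair (A B T : {set 'I_d}) (l g : nat) :
  #|A| = l -> #|B| = l -> #|T| = l ->
  #|A :&: T| = l.-1 -> #|B :&: T| = l.-1 -> #|A :&: B| = g ->
  (g < l)%N ->
  let c := (l%:R - 1) / (l%:R + g%:R) : R in
  E_theta (fun th => Defs.pred_loss (demo_mx (@Defs.indic R d) [tuple A; B]) th
                         (Defs.indic R T))
  = (l%:R * (1 - 2 * c) / 2) ^+ 2 + (l%:R - 2 * c * (l%:R - 1)) / 12.
Proof.
move=> hA hB hT hAT hBT hAB glt c.
have l0 : (0 < l)%N by apply: leq_ltn_trans glt.
have hl1 : (l.-1)%:R = l%:R - 1 :> R by rewrite -{2}(prednK l0) -addn1 natrD addrK.
set E := demo_mx _ _.
set u := Defs.indic R A; set v := Defs.indic R B; set q := Defs.indic R T.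
have Luu : inner u u = l%:R by rewrite inner_indic finset.setIid hA.
have Lvv : inner v v = l%:R by rewrite inner_indic finset.setIid hB.
have Lqq : inner q q = l%:R by rewrite inner_indic finset.setIid hT.
have Luv : inner u v = g%:R by rewrite inner_indic hAB.
have Lvu : inner v u = g%:R by rewrite innerC.
have Luq : inner u q = l%:R - 1 by rewrite inner_indic hAT.
have Lvq : inner v q = l%:R - 1 by rewrite inner_indic hBT.
have Lqu : inner q u = l%:R - 1 by rewrite innerC.
have Lqv : inner q v = l%:R - 1 by rewrite innerC.
have lg0 : l%:R + g%:R != 0 :> R.
  by rewrite -natrD pnatr_eq0 -lt0n addn_gt0 l0.
have Hc : c * (l%:R + g%:R) = l%:R - 1 by rewrite /c; field.
set r := q - c *: (u + v).
have Hru : inner r u = 0.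
  by rewrite /r innerBl innerZl innerDl Luu Lvu Lqu -Hc; ring.
have Hrv : inner r v = 0.
  by rewrite /r innerBl innerZl innerDl Luv Lvv Lqv -Hc; ring.
have Hrr : inner r r = l%:R - 2 * c * (l%:R - 1).
  have -> : inner r r = inner (q - c *: (u + v)) r by [].
  rewrite innerBl innerZl innerDl (innerC u) (innerC v) Hru Hrv.
  rewrite (innerC q r) /r innerBl innerZl innerDl Lqq Luq Lvq; ring.
have Hsr : \sum_j r 0 j = l%:R * (1 - 2 * c).
  rewrite (eq_bigr (fun j => q 0 j - c * (u 0 j + v 0 j))); last first.
    by move=> j _; rewrite !mxE.
  rewrite sumrB -mulr_sumr big_split /= !sum_indic hA hB hT; ring.
have HwE : const_mx c *m E = c *: (u + v).
  apply/matrixP => i j; rewrite !mxE !big_ord_recr big_ord0 /= !mxE.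
  by rewrite !(tnth_nth A) /= add0r mulrDr.
have Hrow : forall k : 'I_2, inner (row k E) r = 0.
  move=> k; rewrite /E demo_row -/u -/v; case: (k == 0);
  by rewrite innerC.
have HEr : E *m (q - const_mx c *m E)^T = 0.
  apply/matrixP => i j; rewrite (ord1 j) HwE -/r mulmx_tr_entry Hrow.
  by rewrite mxE.
have HG : E *m E^T \in unitmx.
  apply: (@unit22 _ (l%:R) (g%:R)).
    move=> i j; rewrite mulmx_tr_entry2 /E !demo_row -/u -/v.
    by case: (ord2_cases i) => ->; case: (ord2_cases j) => -> /=.
  rewrite eqf_sqr negb_or.
  have gl : g%:R < l%:R :> R by rewrite ltr_nat.
  have g0 : 0 <= g%:R :> R by [].
  apply/andP; split; apply/eqP => H.
    by move: gl; rewrite H ltxx.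
  by move: lg0; rewrite H addNr eqxx.
rewrite /E_theta.
pose a := fun k : nat => oapp (fun i : 'I_d => r 0 i) 0 (insub k).
have Ha : forall i : 'I_d, a i = r 0 i by move=> i; rewrite /a valK.
have Hf : (fun g0 : nat -> R => Defs.pred_loss E (\row_(i < d) g0 i) q)
        = (fun g0 => (0 + \sum_(i < d) a i * g0 i) ^+ 2).
  apply/funext => g0; rewrite (loss_eq _ _ _ _ (MP_exists E HG) HEr) HwE -/r innerE add0r.
  by congr (_ ^+ 2); apply: eq_bigr => i _; rewrite mxE Ha mulrC.
rewrite Hf unif_quad add0r -!mulr_suml.
have -> : \sum_(i < d) a i = \sum_j r 0 j by apply: eq_bigr => i _; rewrite Ha.
have -> : \sum_(i < d) a i ^+ 2 = inner r r.
  by rewrite innerE; apply: eq_bigr => i _; rewrite Ha expr2.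
rewrite Hsr Hrr; ring.
Qed.

End LA.


Module SetsM.
Import all_boot all_order all_algebra.
Import Order.TTheory GRing.Theory Num.Theory.
Set Implicit Arguments. Unset Strict Implicit.
Section Sets.
Variable l : nat.
Local Notation d := (Defs.dim l).
Local Notation FH := (Defs.first_half l).
Local Notation SH := (Defs.second_half l).
Local Notation D := (Defs.demo_set l).

Lemma halves_disj (X Y : {set 'I_d}) : X \subset FH -> Y \subset SH -> X :&: Y = set0.
Proof.
move=> /subsetP HX /subsetP HY; apply/setP => i; rewrite !inE.
apply/negP => /andP[/HX]; rewrite inE => h1 /HY; rewrite inE.
by rewrite leqNgt h1.
Qed.

Lemma demoP (X : {set 'I_d}) : X \in D ->
  exists T1 T2, [/\ X = T1 :|: T2, T1 \subset FH, #|T1| = l.-1,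
                    T2 \subset SH & #|T2| = 1%N].
Proof.
case/imset2P => T1 T2; rewrite !inE => /andP[h1 /eqP h2] /andP[h3 /eqP h4] ->.
by exists T1, T2.
Qed.

Lemma mk_demo (T1 T2 : {set 'I_d}) : T1 \subset FH -> #|T1| = l.-1 ->
  T2 \subset SH -> #|T2| = 1%N -> T1 :|: T2 \in D.
Proof.
move=> h1 h2 h3 h4; apply/imset2P; exists T1 T2 => //; rewrite inE.
  by rewrite h1 h2 eqxx.
by rewrite h3 h4 eqxx.
Qed.

Lemma demo_card (X : {set 'I_d}) : X \in D -> #|X| = l.-1.+1.
Proof.
case/demoP => T1 [T2 [-> h1 h2 h3 h4]].
by rewrite cardsU (halves_disj h1 h3) cards0 subn0 h2 h4 addn1.
Qed.

Lemma demo_inter (X Tq : {set 'I_d}) : X \in D -> Tq \subset FH ->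
  (#|X :&: Tq| <= l.-1)%N.
Proof.
case/demoP => T1 [T2 [-> h1 h2 h3 h4]] hq.
rewrite setIUl (setIC T2) (halves_disj hq h3) setU0 -h2.
exact: subset_leq_card (subsetIl _ _).
Qed.

Lemma inter_bounds n (A B T : {set 'I_n}) k :
  #|A| = k.+1 -> #|B| = k.+1 -> #|T| = k.+1 ->
  #|A :&: T| = k -> #|B :&: T| = k -> A != B ->
  #|A :&: B| = k \/ #|A :&: B| = k.-1.
Proof.
move=> hA hB hT hAT hBT hne.
have up : (#|A :&: B| <= k)%N.
  rewrite leqNgt; apply/negP => hgt.
  have : A :&: B == A by rewrite eqEcard subsetIl hA.
  move/eqP => hAB.
  have sAB : A \subset B by rewrite -hAB subsetIr.
  move: hne; rewrite eqEcard sAB hA hB leqnn //.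
have lo : (k.-1 <= #|A :&: B|)%N.
  have h1 := cardsUI (A :&: T) (B :&: T).
  have h2 : (#|(A :&: T) :|: (B :&: T)| <= k.+1)%N.
    by rewrite -hT; apply: subset_leq_card; rewrite subUset !subsetIr.
  have h3 : (#|(A :&: T) :&: (B :&: T)| <= #|A :&: B|)%N.
    by apply: subset_leq_card; apply/subsetP => x; rewrite !inE => /andP[/andP[-> _] /andP[-> _]].
  rewrite hAT hBT in h1; lia.
lia.
Qed.

Lemma inter3 n (X Y T : {set 'I_n}) :
  (#|Y :&: T| + #|X :&: T| <= #|T| + #|Y :&: X|)%N.
Proof.
have h1 := cardsUI (Y :&: T) (X :&: T).
have h2 : (#|(Y :&: T) :|: (X :&: T)| <= #|T|)%N.
  by apply: subset_leq_card; rewrite subUset !subsetIr.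
have h3 : (#|(Y :&: T) :&: (X :&: T)| <= #|Y :&: X|)%N.
  by apply: subset_leq_card; apply/subsetP => x; rewrite !inE => /andP[/andP[-> _] /andP[-> _]].
lia.
Qed.

Lemma inter_lt n (X Y : {set 'I_n}) k : #|X| = k -> #|Y| = k -> Y != X -> (#|Y :&: X| < k)%N.
Proof.
move=> hX hY hne; rewrite ltnNge; apply/negP => hge.
have : Y :&: X == Y by rewrite eqEcard subsetIl hY.
move/eqP => e.
have sYX : Y \subset X by rewrite -e subsetIr.
by move: hne; rewrite eqEcard sYX hX hY leqnn.
Qed.

Variable Tq : {set 'I_d}.
Hypothesis hq1 : Tq \subset FH.
Hypothesis hq2 : #|Tq| = l.
Hypothesis hl : (3 <= l)%N.

Lemma cardD1q i : i \in Tq -> #|Tq :\ i| = l.-1.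
Proof. move=> hi; have h := cardsD1 i Tq; rewrite hi hq2 add1n in h; by rewrite [in RHS]h. Qed.

Definition W (i s : 'I_d) : {set 'I_d} := (Tq :\ i) :|: [set s].

Lemma W_demo i s : i \in Tq -> s \in SH -> W i s \in D.
Proof.
move=> hi hs; apply: mk_demo.
- exact: subset_trans (subsetDl _ _) hq1.
- exact: cardD1q.
- by rewrite sub1set.
- by rewrite cards1.
Qed.

Lemma W_inter i s : s \in SH -> W i s :&: Tq = Tq :\ i.
Proof.
move=> hs; rewrite /W setIUl (setIC [set s]).
have -> : Tq :&: [set s] = set0 by apply: halves_disj => //; rewrite sub1set.
by rewrite setU0; apply/setIidPl; exact: subsetDl.
Qed.

Lemma W_inter_card i s : i \in Tq -> s \in SH -> #|W i s :&: Tq| = l.-1.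
Proof.
move=> hi hs; rewrite W_inter //; exact: cardD1q.
Qed.

Lemma exists_ab : exists a b : 'I_d, [/\ a \in SH, b \in SH & a != b].
Proof.
have h1 : (2 * l < d)%N by rewrite /Defs.dim; lia.
have h2 : ((2 * l).+1 < d)%N by rewrite /Defs.dim; lia.
exists (Ordinal h1), (Ordinal h2); split; rewrite ?inE //=.
by apply/eqP => /(congr1 val) /=; lia.
Qed.

Lemma notin_FH (s : 'I_d) (X : {set 'I_d}) : s \in SH -> X \subset FH -> s \notin X.
Proof.
move=> hs hX; apply/negP => hx.
have : s \in X :&: [set s] by rewrite !inE hx eqxx.
by rewrite (halves_disj hX) ?inE // sub1set.
Qed.

Lemma W_neq i a b : a \in SH -> b \in SH -> a != b -> W i a != W i b.
Proof.
move=> ha hb hab; apply/negP => /eqP e.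
have : a \in W i b by rewrite -e !inE eqxx orbT.
rewrite !inE (negbTE hab) orbF => /andP[_ ha'].
by move: (notin_FH ha hq1); rewrite ha'.
Qed.

Lemma W_pair_inter i a b : i \in Tq -> (l.-1 <= #|W i a :&: W i b|)%N.
Proof.
move=> hi; rewrite -(cardD1q hi); apply: subset_leq_card.
by apply/subsetP => x hx; rewrite !inE; move: hx; rewrite !inE => ->.
Qed.

Lemma div_witness t0 : t0 \in D -> #|t0 :&: Tq| = l.-1 ->
  exists j s, [/\ j \in Tq, s \in SH, W j s != t0 & #|W j s :&: t0| = l.-1.-1].
Proof.
move=> ht0 hc.
have [j hj] : exists j, j \in t0 :&: Tq by apply/card_gt0P; rewrite hc; lia.
have [s [hs hst]] : exists s, s \in SH /\ s \notin t0.
  case: exists_ab => a [b [ha hb hab]].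
  case/demoP: ht0 => T1 [T2 [e h1 h2 h3 h4]].
  case hat: (a \in t0); last by exists a; rewrite hat.
  case hbt: (b \in t0); last by exists b; rewrite hbt.
  exfalso.
  have inT2 : forall x, x \in SH -> x \in t0 -> x \in T2.
    move=> x hx; rewrite e inE => /orP[hx1|//].
    by move: (notin_FH hx h1); rewrite hx1.
  have : [set a; b] \subset T2.
    by apply/subsetP => x; rewrite !inE => /orP[] /eqP ->; apply: inT2.
  move/subset_leq_card; rewrite cards2 hab h4 //.
exists j, s; split.
- by move: hj; rewrite inE => /andP[].
- exact: hs.
- apply/negP => /eqP e; move: hst; rewrite -e !inE eqxx orbT //.
- have -> : W j s :&: t0 = (t0 :&: Tq) :\ j.
    apply/setP => x; rewrite !inE; case: (eqVneq x s) => [->|hxs].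
      by rewrite (negbTE hst) !andbF.
    by rewrite orbF; case: (x \in t0); case: (x \in Tq); rewrite ?andbF ?andbT.
  have h := cardsD1 j (t0 :&: Tq); rewrite hj hc add1n in h.
  by rewrite [in RHS]h.
Qed.

End Sets.

End SetsM.
Import SetsM.

Set Implicit Arguments. Unset Strict Implicit.
Section Vals.
Variable R : realType.

Lemma val_gm1 (L c : R) : 1 < L -> c = (L - 1) / (L + (L - 1)) ->
  1 / 12 < (L * (1 - 2 * c) / 2) ^+ 2 + (L - 2 * c * (L - 1)) / 12.
Proof.
move=> hL ec.
have h0 : 0 < L + (L - 1) by lra.
have hc : 1 - 2 * c = 1 / (L + (L - 1)) by rewrite ec; field; lra.
have h1 : 0 < 1 - 2 * c by rewrite hc divr_gt0.
have h2 : 0 <= (L * (1 - 2 * c) / 2) ^+ 2 by apply: sqr_ge0.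
have h3 : 1 < L - 2 * c * (L - 1).
  have -> : L - 2 * c * (L - 1) = 1 + (L - 1) * (1 - 2 * c) by ring.
  have : 0 < (L - 1) * (1 - 2 * c) by apply: mulr_gt0 => //; lra.
  lra.
lra.
Qed.

Lemma val_gm2 (L c : R) : 1 < L -> c = (L - 1) / (L + (L - 2)) ->
  (L * (1 - 2 * c) / 2) ^+ 2 + (L - 2 * c * (L - 1)) / 12 = 1 / 12.
Proof.
move=> hL ec.
have hc : c = 1 / 2 by rewrite ec; field; lra.
rewrite hc; field; done.
Qed.

End Vals.

Lemma tuple2E (T : Type) (t : 2.-tuple T) : t = [tuple tnth t 0; tnth t 1].
Proof.
by apply: eq_from_tnth => k; case: (ord2_cases k) => ->; rewrite (tnth_nth (tnth t 0)).
Qed.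

Lemma div_arith (R : realType) (a L K M : R) : 1 / 2 < a -> a < 1 -> 0 < L ->
  a * ((L - 1) / L) + (1 - a) * (1 - (L - 2) / L) <= a * (K / L) + (1 - a) * (1 - M / L) ->
  (K + 2 <= L -> K <= M + 1 -> False) /\ (K = L - 1 -> M = L - 1 -> False).
Proof.
move=> h1 h2 h3 h.
have e1 : a * ((L - 1) / L) + (1 - a) * (1 - (L - 2) / L) = (a * (L - 1) + (1 - a) * 2) / L.
  by field; rewrite gt_eqF.
have e2 : a * (K / L) + (1 - a) * (1 - M / L) = (a * K + (1 - a) * (L - M)) / L.
  by field; rewrite gt_eqF.
rewrite e1 e2 ler_pM2r ?invr_gt0 // in h.
split.
  move=> hk hm.
  have p1 : 0 <= (2 * a - 1) * (L - 2 - K) by apply: mulr_ge0; lra.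
  have p2 : 0 <= (1 - a) * (M + 1 - K) by apply: mulr_ge0; lra.
  nra.
move=> hk hm; rewrite hk hm in h; nra.
Qed.

Lemma nat_facts (k m l : nat) : (2 < l)%N -> (k <= l.-1)%N -> (k + l.-1 <= l + m)%N ->
  (m < l)%N -> ((k < l.-1)%N -> (k + 2 <= l)%N /\ (k <= m + 1)%N) /\
               (k = l.-1 -> m != l.-1 -> m = l.-2).
Proof. move=> *; split; [move=> *; split|move=> *]; lia. Qed.

Lemma natr_pred (R : realType) n : (0 < n)%N -> (n.-1)%:R = n%:R - 1 :> R.
Proof. by move=> hn; rewrite -{2}(prednK hn) -addn1 natrD addrK. Qed.

Lemma natr_pred2 (R : realType) n : (1 < n)%N -> (n.-2)%:R = n%:R - 2 :> R.
Proof.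
move=> hn; have h : n = (n.-2 + 2)%N by lia.
by rewrite [in RHS]h natrD addrK.
Qed.

Lemma sum_tuple2 (R : realType) (T : finType) (G : 2.-tuple T -> R) :
  \sum_(t : 2.-tuple T) G t = \sum_x \sum_y G [tuple x; y].
Proof.
rewrite pair_big /= (reindex (fun p : T * T => [tuple p.1; p.2])) /=.
  by apply: eq_bigr.
exists (fun t => (tnth t 0, tnth t 1)) => [[x y] _ | t _] /=.
  by rewrite !(tnth_nth x).
by rewrite -tuple2E.
Qed.

Lemma sum_inv_card (R : realType) (T : finType) (A : {set T}) :
  \sum_(y : T) (if y \in A then (#|A|%:R)^-1 else 0) <= 1 :> R.
Proof.
rewrite -big_mkcond sumr_const.
case: (posnP #|A|) => h; first by rewrite h mulr0n ler01.
rewrite -[X in X <= _]mulr_natr mulVf ?pnatr_eq0 -?lt0n //.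
Qed.

Section Inst.
Variable R : realType.
Variable l : nat.
Local Notation d := (Defs.dim l).
Local Notation D := (Defs.demo_set l).
Local Notation SH := (Defs.second_half l).
Variable Tq : {set 'I_d}.
Hypothesis hq1 : Tq \subset Defs.first_half l.
Hypothesis hq2 : #|Tq| = l.
Hypothesis hl : (3 <= l)%N.
Local Notation e := (@Defs.indic R d).
Local Notation q := (Defs.indic R Tq).

Lemma l0 : (0 < l)%N. Proof. by apply: leq_trans hl. Qed.
Lemma lR : 1 < l%:R :> R. Proof. by rewrite ltr1n; apply: leq_trans hl. Qed.

Lemma demo_cardl x : x \in D -> #|x| = l.
Proof. by move=> hx; rewrite (demo_card hx) (prednK l0). Qed.

Lemma sim_indic (A B : {set 'I_d}) k : #|A| = k -> #|B| = k -> (0 < k)%N ->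
  Sim (e A) (e B) = #|A :&: B|%:R / k%:R.
Proof.
move=> hA hB hk; rewrite /Sim /enorm !inner_indic !finset.setIid hA hB.
by rewrite -expr2 sqr_sqrtr // ler0n.
Qed.

Lemma sim_demo x : x \in D -> Defs.simq e q x = #|x :&: Tq|%:R / l%:R.
Proof. by move=> hx; rewrite /Defs.simq (@sim_indic _ _ l) // ?demo_cardl // l0. Qed.

Lemma sim_le x y : x \in D -> y \in D ->
  (Defs.simq e q x <= Defs.simq e q y) = (#|x :&: Tq| <= #|y :&: Tq|)%N.
Proof.
move=> hx hy; rewrite !sim_demo // ler_pM2r ?ler_nat // invr_gt0 ltr0n l0 //.
Qed.

Lemma exists_i : exists i, i \in Tq.
Proof. by apply/card_gt0P; rewrite hq2 l0. Qed.

Lemma exists_out A B : (#|A :&: Tq| < l.-1)%N ->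
  exists w, [/\ w \in D, w \notin [:: A; B] & #|w :&: Tq| = l.-1].
Proof.
move=> hA.
case: exists_i => i hi.
case: (exists_ab hq1 hq2 hl) => a [b [ha hb hab]].
have w1D := W_demo hq1 hq2 hi ha; have w2D := W_demo hq1 hq2 hi hb.
have c1 := W_inter_card hq1 hq2 hi ha; have c2 := W_inter_card hq1 hq2 hi hb.
have n12 := @W_neq _ _ hq1 i a b ha hb hab.
have nA1 : W Tq i a != A by apply/negP => /eqP e1; move: hA; rewrite -e1 c1 ltnn.
have nA2 : W Tq i b != A by apply/negP => /eqP e1; move: hA; rewrite -e1 c2 ltnn.
case hB1 : (W Tq i a == B).
  exists (W Tq i b); split => //.
  rewrite !inE negb_or nA2 /= -(eqP hB1) eq_sym n12 //.
exists (W Tq i a); split => //.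
by rewrite !inE negb_or nA1 hB1.
Qed.

Lemma valid_props A B : Defs.topk_valid e D q [tuple A; B] ->
  [/\ A \in D, B \in D, A != B, #|A :&: Tq| = l.-1 & #|B :&: Tq| = l.-1].
Proof.
rewrite /Defs.topk_valid => /and3P[hu ha /forallP hf].
move: hu ha; rewrite /= inE andbT => hAB /and3P[hA hB _].
have key : forall x, x \in D -> x \notin [:: A; B] ->
    Defs.simq e q x <= Defs.simq e q A /\ Defs.simq e q x <= Defs.simq e q B.
  move=> x hx hn; move: (hf x); rewrite hx /= => /implyP /(_ hn) /and3P[h1 h2 _].
  by split.
have mx : forall C, C \in D -> C \in [:: A; B] -> #|C :&: Tq| = l.-1.
  move=> C hC hCin; apply/eqP; rewrite eqn_leq (demo_inter hC hq1) /=.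
  rewrite leqNgt; apply/negP => hlt.
  move: hCin; rewrite !inE => /orP[] /eqP eC; rewrite eC in hlt hC.
    case: (exists_out B hlt) => w [hw hwn hwc].
    have [k1 k2] := key w hw hwn.
    by move: k1; rewrite sim_le // hwc leqNgt hlt.
  case: (exists_out A hlt) => w [hw hwn hwc].
  have hwn' : w \notin [:: A; B] by move: hwn; rewrite !inE orbC.
  have [k1 k2] := key w hw hwn'.
  by move: k2; rewrite sim_le // hwc leqNgt hlt.
split => //.
- by apply: mx; rewrite ?inE ?eqxx.
- by apply: mx; rewrite ?inE ?eqxx ?orbT.
Qed.

Lemma valid_witness i a b : i \in Tq -> a \in SH -> b \in SH -> a != b ->
  Defs.topk_valid e D q [tuple W Tq i a; W Tq i b].
Proof.
move=> hi ha hb hab.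
have w1D := W_demo hq1 hq2 hi ha; have w2D := W_demo hq1 hq2 hi hb.
have c1 := W_inter_card hq1 hq2 hi ha; have c2 := W_inter_card hq1 hq2 hi hb.
have n12 := @W_neq _ _ hq1 i a b ha hb hab.
rewrite /Defs.topk_valid /= inE n12 w1D w2D /=; apply/forallP => x.
apply/implyP => hx; apply/implyP => _.
by rewrite !sim_le // c1 c2 (demo_inter hx hq1).
Qed.

Definition Lpair (A B : {set 'I_d}) :=
  E_theta (fun th => Defs.pred_loss (demo_mx e [tuple A; B]) th q).

Lemma Lpair_val A B g : A \in D -> B \in D -> #|A :&: Tq| = l.-1 -> #|B :&: Tq| = l.-1 ->
  #|A :&: B| = g -> (g < l)%N ->
  Lpair A B = let c := (l%:R - 1) / (l%:R + g%:R) : R in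
     (l%:R * (1 - 2 * c) / 2) ^+ 2 + (l%:R - 2 * c * (l%:R - 1)) / 12.
Proof.
move=> hA hB hAT hBT hg glt.
exact: (@loss_pair R d A B Tq l g (demo_cardl hA) (demo_cardl hB) hq2 hAT hBT hg glt).
Qed.

Lemma Lpair_valid A B : Defs.topk_valid e D q [tuple A; B] -> 1 / 12 <= Lpair A B.
Proof.
case/valid_props => hA hB hAB hAT hBT.
have hA' : #|A| = l.-1.+1 by rewrite (demo_cardl hA) (prednK l0).
have hB' : #|B| = l.-1.+1 by rewrite (demo_cardl hB) (prednK l0).
have hT' : #|Tq| = l.-1.+1 by rewrite hq2 (prednK l0).
have l2 : (1 < l)%N by apply: leq_trans hl.
case: (inter_bounds hA' hB' hT' hAT hBT hAB) => hg.
  have glt : (l.-1 < l)%N by rewrite prednK ?l0 // leqnn.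
  rewrite (Lpair_val hA hB hAT hBT hg glt) /= natr_pred ?l0 //.
  apply/ltW/(val_gm1 lR); congr (_ / _); ring.
have glt : (l.-1.-1 < l)%N by lia.
rewrite (Lpair_val hA hB hAT hBT hg glt) /= natr_pred2 //.
by rewrite (val_gm2 lR).
Qed.

Lemma Lpair_witness i a b : i \in Tq -> a \in SH -> b \in SH -> a != b ->
  1 / 12 < Lpair (W Tq i a) (W Tq i b).
Proof.
move=> hi ha hb hab.
case/valid_props: (valid_witness hi ha hb hab) => hA hB hAB hAT hBT.
have hA' : #|W Tq i a| = l.-1.+1 by rewrite (demo_cardl hA) (prednK l0).
have hB' : #|W Tq i b| = l.-1.+1 by rewrite (demo_cardl hB) (prednK l0).
have hT' : #|Tq| = l.-1.+1 by rewrite hq2 (prednK l0).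
have hg : #|W Tq i a :&: W Tq i b| = l.-1.
  case: (inter_bounds hA' hB' hT' hAT hBT hAB) => // hg.
  have := W_pair_inter hq2 a b hi; rewrite hg; lia.
have glt : (l.-1 < l)%N by rewrite prednK ?l0 // leqnn.
rewrite (Lpair_val hA hB hAT hBT hg glt) /= natr_pred ?l0 //.
apply: (val_gm1 lR); congr (_ / _); ring.
Qed.

Lemma topk_gt : 1 / 12 < Defs.topk_loss 2 e D q.
Proof.
case: exists_i => i hi.
case: (exists_ab hq1 hq2 hl) => a [b [ha hb hab]].
set ts := [tuple W Tq i a; W Tq i b].
have hv : Defs.topk_valid e D q ts by apply: valid_witness.
set F := fun t : 2.-tuple {set 'I_d} =>
   E_theta (fun th => Defs.pred_loss (demo_mx e t) th q).
have Fv : forall t, Defs.topk_valid e D q t -> 1 / 12 <= F t.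
  move=> t; rewrite [in X in X -> _](tuple2E t) => ht.
  by rewrite /F [in demo_mx _ t](tuple2E t); apply: Lpair_valid.
have Fs : 1 / 12 < F ts by apply: Lpair_witness.
rewrite /Defs.topk_loss -/F.
set N := #|[set t : 2.-tuple {set 'I_d} | Defs.topk_valid e D q t]|.
have hS : \sum_(t | Defs.topk_valid e D q t) F t =
          \sum_(t in [set t : 2.-tuple {set 'I_d} | Defs.topk_valid e D q t]) F t.
  by apply: eq_bigl => t; rewrite inE.
have hN : (0 < N)%N by apply/card_gt0P; exists ts; rewrite inE.
have hS2 : (1 / 12) *+ N < \sum_(t | Defs.topk_valid e D q t) F t.
  rewrite hS -sumr_const -subr_gt0 -sumrB (bigD1 ts) ?inE //=.
  apply: (@lt_le_trans _ _ (F ts - 1 / 12)); first by rewrite subr_gt0.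
  rewrite lerDl; apply: sumr_ge0 => t; rewrite inE => /andP[ht _].
  by rewrite subr_ge0; apply: Fv.
rewrite -(@ltr_pM2l _ N%:R) ?ltr0n // [X in _ < X]mulrA mulfV ?pnatr_eq0 -?lt0n // mul1r.
by move: hS2; rewrite -mulr_natl mulrA mulr1 mul1r.
Qed.


Variable alpha : R.
Hypothesis ha1 : 1 / 2 < alpha.
Hypothesis ha2 : alpha < 1.

Lemma argmax0 x : x \in Defs.div_argmax e D q alpha [::] ->
  x \in D /\ #|x :&: Tq| = l.-1.
Proof.
rewrite /Defs.div_argmax inE => /andP[hxD /forallP hall].
have hx : x \in D by move: hxD; rewrite inE => /andP[].
split => //.
case: exists_i => i hi.
case: (exists_ab hq1 hq2 hl) => a [b [ha hb hab]].
have w1D := W_demo hq1 hq2 hi ha.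
have c1 := W_inter_card hq1 hq2 hi ha.
move: (hall (W Tq i a)); rewrite !inE w1D andbT /=.
rewrite /Defs.div_score /= !mulr0 !addr0 /= => hle.
have a0 : 0 < alpha by apply: lt_trans ha1; rewrite divr_gt0.
have hs : Defs.simq e q (W Tq i a) <= Defs.simq e q x.
  by move: hle; rewrite ler_pM2l.
move: hs; rewrite sim_le // c1 => hs.
by apply/eqP; rewrite eqn_leq hs (demo_inter hx hq1).
Qed.


Lemma score1 x0 z : x0 \in D -> z \in D ->
  Defs.div_score e q alpha [:: x0] z =
  alpha * (#|z :&: Tq|%:R / l%:R) + (1 - alpha) * (1 - #|z :&: x0|%:R / l%:R).
Proof.
move=> hx0 hz; rewrite /Defs.div_score /= big_seq1 invr1 mul1r sim_demo //.
by rewrite (sim_indic (demo_cardl hz) (demo_cardl hx0) l0).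
Qed.

Lemma argmax1 x0 y : x0 \in D -> #|x0 :&: Tq| = l.-1 ->
  y \in Defs.div_argmax e D q alpha [:: x0] ->
  [/\ y \in D, y != x0, #|y :&: Tq| = l.-1 & #|y :&: x0| = l.-2].
Proof.
move=> hx0 hc; rewrite /Defs.div_argmax inE => /andP[hyD /forallP hall].
move: hyD; rewrite !inE => /andP[hyn hy].
have hne : y != x0 by [].
case: (div_witness hq1 hq2 hl hx0 hc) => j [s [hj hs hne' hcard]].
have wD := W_demo hq1 hq2 hj hs.
have wc := W_inter_card hq1 hq2 hj hs.
move: (hall (W Tq j s)); rewrite !inE wD hne' andbT /= => hle.
rewrite !score1 // wc hcard natr_pred ?l0 // natr_pred2 ?(leq_trans _ hl) // in hle.
have hk := demo_inter hy hq1.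
have h3 := inter3 x0 y Tq; rewrite hq2 hc in h3.
have hm := inter_lt (demo_cardl hx0) (demo_cardl hy) hne.
have lpos : 0 < l%:R :> R by rewrite ltr0n l0.
have [da1 da2] := div_arith ha1 ha2 lpos hle.
have l3 := hl.
have [nf1 nf2] := nat_facts hl hk h3 hm.
case: (ltnP #|y :&: Tq| l.-1) => hk2.
  have [n1 n2] := nf1 hk2.
  exfalso; apply: da1.
    have : ((#|y :&: Tq| + 2)%:R <= l%:R :> R) by rewrite ler_nat.
    by rewrite natrD.
  have : (#|y :&: Tq|%:R <= (#|y :&: x0| + 1)%:R :> R) by rewrite ler_nat.
  by rewrite natrD.
have ek : #|y :&: Tq| = l.-1 by apply/eqP; rewrite eqn_leq hk hk2.
case: (eqVneq #|y :&: x0| l.-1) => em.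
  exfalso; apply: da2; by rewrite ?ek ?em natr_pred ?l0.
by split => //; apply: nf2.
Qed.


Local Notation A0 := (Defs.div_argmax e D q alpha [::]).
Local Notation A1 x := (Defs.div_argmax e D q alpha [:: x]).

Lemma div_prob2 x y : Defs.div_prob e D q alpha [tuple x; y] =
  (if x \in A0 then (#|A0|%:R)^-1 else 0) * (if y \in A1 x then (#|A1 x|%:R)^-1 else 0).
Proof.
rewrite /Defs.div_prob !big_ord_recr big_ord0 /= Monoid.mul1m.
by rewrite !(tnth_nth x) /=.
Qed.

Lemma topkdiv_le : Defs.topkdiv_loss 2 e D q alpha <= 1 / 12.
Proof.
rewrite /Defs.topkdiv_loss.
have step : forall t : 2.-tuple {set 'I_d},
  Defs.div_prob e D q alpha t * E_theta (fun th => Defs.pred_loss (demo_mx e t) th q)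
  = Defs.div_prob e D q alpha t * (1 / 12).
  move=> t; rewrite (tuple2E t); set x := tnth t 0; set y := tnth t 1.
  rewrite div_prob2.
  case hx : (x \in A0); last by rewrite !mul0r.
  case hy : (y \in A1 x); last by rewrite !mulr0 !mul0r.
  have [hxD hxc] := argmax0 hx.
  have [hyD hyx hyc hyxc] := argmax1 hxD hxc hy.
  congr (_ * _).
  have hg : #|x :&: y| = l.-2 by rewrite finset.setIC.
  have glt : (l.-2 < l)%N by rewrite -subn2 ltn_subrL l0.
  change (Lpair x y = 1 / 12); rewrite (Lpair_val hxD hyD hxc hyc hg glt) /= natr_pred2 ?(leq_trans _ hl) //.
  by rewrite (val_gm2 lR).
rewrite (eq_bigr _ (fun t _ => step t)) -mulr_suml.
apply: (@le_trans _ _ (1 * (1 / 12))); last by rewrite mul1r.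
rewrite ler_pM2r ?divr_gt0 // sum_tuple2.
apply: (@le_trans _ _ (\sum_x (if x \in A0 then (#|A0|%:R)^-1 else 0))); last first.
  exact: sum_inv_card.
apply: ler_sum => x _; rewrite (eq_bigr _ (fun y _ => div_prob2 x y)) -mulr_sumr.
case: (x \in A0); last by rewrite mul0r.
apply: (@le_trans _ _ ((#|A0|%:R)^-1 * 1)); last by rewrite mulr1.
apply: ler_wpM2l; first by rewrite invr_ge0 ler0n.
exact: sum_inv_card.
Qed.

End Inst.
Unset Implicit Arguments.
Lemma query_nonempty {l : nat} : (0 < l)%N -> exists T : {set 'I_(Defs.dim l)},
  T \in Defs.query_set l.
Proof.
move=> l0.
have hk : (l <= Defs.dim l)%N by rewrite /Defs.dim; lia.
exists ((@widen_ord l (Defs.dim l) hk) @: [set: 'I_l]).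
rewrite inE; apply/andP; split.
  apply/fintype.subsetP => x /finset.imsetP [j _ ->]; rewrite inE /=.
  have := ltn_ord j; lia.
by rewrite finset.card_imset ?finset.cardsT ?card_ord //; by move=> x y /(congr1 val) /= /val_inj.
Qed.

Theorem theorem2 (R : realType) (l : nat) (alpha : R) :
  (3 <= l)%N ->
  1 - (l%:R)^-1 <= alpha -> alpha < 1 ->
  L_topkdiv l alpha < L_topk R l.
Proof.
move=> hl ha1 ha2.
have l0 : (0 < l)%N by apply: leq_trans hl.
have hl3 : 3 <= l%:R :> R by rewrite (ler_nat R 3 l).
have hinv : (l%:R)^-1 <= 1 / 3 :> R.
  rewrite mul1r lef_pV2 ?posrE //; lra.
have ha : 1 / 2 < alpha by lra.
rewrite /L_topkdiv /L_topk /avg_query.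
rewrite ltr_pM2l ?invr_gt0 ?ltr0n; last first.
  case: (query_nonempty l0 : exists T, T \in Defs.query_set l) => T hT; apply/card_gt0P; by exists T.
apply: ltr_sum.
  case: (query_nonempty l0 : exists T, T \in Defs.query_set l) => T hT; apply/hasP; exists T => //.
move=> T; rewrite inE => /andP[h1 /eqP h2].
apply: (le_lt_trans (topkdiv_le h1 h2 hl ha ha2)).
exact: topk_gt.
Qed.
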